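(* Let $\psi=\mathcal{X}_{[0,1/2)}-\mathcal{X}_{[1/2,1)}$ be the Haar wavelet, and let $\{a_I:I\in\mathcal{D}\}$ be independent random variables with $\sum_I\mathscr{E}|a_I|<\infty$ and $a_I\in\mathscr{G}(\nu)$ for all $I$, for some $\nu>0$. For $x\neq y$ in $\mathbb{R}^+$ let $K(x,y;\cdot)=\sum_{I\in\mathcal{D}}a_I\psi_I(x)\psi_I(y)\in L^2(\Omega,d\mathscr{P})$. Then there is a constant $B$ such that for all $x,y,x',y'\in\mathbb{R}^+$ with $x\ne y$: (a) $\|K(x,y;\cdot)\|_{L^2(\Omega,d\mathscr{P})}\leq \dfrac{B}{\delta(x,y)}$; (b.i) $\|K(x',y;\cdot)-K(x,y;\cdot)\|_{L^2(\Omega,d\mathscr{P})}\leq B\dfrac{\delta(x',x)}{\delta(x,y)^2}$ whenever $2\delta(x',x)\leq\delta(x,y)$; (b.ii) $\|K(x,y';\cdot)-K(x,y;\cdot)\|_{L^2(\Omega,d\mathscr{P})}\leq B\dfrac{\delta(y',y)}{\delta(x,y)^2}$ whenever $2\delta(y',y)\leq\delta(x,y)$.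
   Context: $\mathcal{D}=\bigcup_{j\in\mathbb{Z}}\{[k2^{-j},(k+1)2^{-j}):k\in\mathbb{Z}\}$ is the family of dyadic intervals of $\mathbb{R}$, and $\mathcal{D}^+$ the dyadic intervals contained in $\mathbb{R}^+=[0,\infty)$; for $I=[k2^{-j},(k+1)2^{-j})$, $\psi_I(x)=2^{j/2}\psi(2^jx-k)$. The dyadic distance on $\mathbb{R}^+$ is $\delta(x,y)=\inf\{|I|: x,y\in I,\ I\in\mathcal{D}^+\}$ (with $|I|$ the length of $I$). For an integrable random variable $X$, $\eta_{X-\mathscr{E}X}(\lambda)=\log \mathscr{E}e^{\lambda(X-\mathscr{E}X)}$, and $X\in\mathscr{G}(\nu)$ means $X$ is integrable and $\eta_{X-\mathscr{E}X}(\lambda)\leq \lambda^2\nu/2$ for all $\lambda\in\mathbb{R}$. *)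

(* Defs.v *)
From HB Require Import structures.
From mathcomp Require Import all_boot all_order all_algebra.
From mathcomp Require Import all_classical all_reals all_analysis.
Set Implicit Arguments. Unset Strict Implicit. Unset Printing Implicit Defensive.
Import Order.TTheory GRing.Theory Num.Theory.
Import numFieldNormedType.Exports.
Local Open Scope classical_set_scope.
Local Open Scope ring_scope.

(* A dyadic interval I = [k 2^-j, (k+1) 2^-j) is indexed by the pair (j,k). *)
Definition dyad := (int * int)%type.

Definition in_dyad {R : realType} (I : dyad) (x : R) : Prop :=
  (I.2%:~R * (2:R) ^ (- I.1) <= x) /\ (x < (I.2 + 1)%:~R * (2:R) ^ (- I.1)).

Definition haar {R : realType} (t : R) : R :=
  (if (0 <= t) && (t < 2^-1) then 1 else 0) -
  (if (2^-1 <= t) && (t < 1) then 1 else 0).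

Definition haarI {R : realType} (I : dyad) (x : R) : R :=
  (Num.sqrt (2:R)) ^ I.1 * haar ((2:R) ^ I.1 * x - I.2%:~R).

(* dyadic distance on R^+ : inf { |I| : x, y in I, I in D^+ } ; |I| = 2^-j,
   and I is contained in [0,oo) iff k >= 0. *)
Definition ddist {R : realType} (x y : R) : R :=
  inf [set r : R | exists I : dyad,
        0 <= I.2 /\ in_dyad I x /\ in_dyad I y /\ r = (2:R) ^ (- I.1)].

Definition independent_family {d} {T : measurableType d} {R : realType}
  (P : probability T R) (a : dyad -> T -> R) : Prop :=
  forall (s : seq dyad) (B : dyad -> set R),
    uniq s -> (forall i, measurable (B i)) ->
    (P (\bigcap_(i in [set` s]) (a i @^-1` B i)) =
     \prod_(i <- s) P (a i @^-1` B i))%E.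

Definition mgf_centered {d} {T : measurableType d} {R : realType}
  (P : probability T R) (X : T -> R) (lambda : R) : T -> R :=
  fun w => expR (lambda * (X w - fine 'E_P[X])).

(* X in G(nu): X integrable and eta_{X-EX}(lambda) <= lambda^2 nu / 2 for all
   lambda (in particular E e^{lambda(X-EX)} is finite so that the log is real) *)
Definition subG {d} {T : measurableType d} {R : realType}
  (P : probability T R) (nu : R) (X : T -> R) : Prop :=
  P.-integrable setT (EFin \o X) /\
  forall lambda : R,
    ('E_P[mgf_centered P X lambda] < +oo)%E /\
    ln (fine 'E_P[mgf_centered P X lambda]) <= lambda ^+ 2 * nu / 2.

(* Partial sum of sum_{I in D} a_I(w) psi_I(x) psi_I(y) over the finite box
   |j| <= N, |k| <= 4^N; these boxes exhaust D = Z x Z. *)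
Definition Kpart {T : Type} {R : realType} (a : dyad -> T -> R) (x y : R)
  (N : nat) (w : T) : R :=
  \sum_(i < (N.*2).+1) \sum_(l < (4 ^ N).*2.+1)
     let I := ((i%:Z - N%:Z)%R, (l%:Z - (4 ^ N)%:Z)%R) in
     a I w * haarI I x * haarI I y.

Definition Kfun {T : Type} {R : realType} (a : dyad -> T -> R) (x y : R)
  (w : T) : R :=
  limn (fun N => Kpart a x y N w).

(* Main.v *)
Require Import Defs.
From HB Require Import structures.
From mathcomp Require Import all_boot all_order all_algebra.
From mathcomp Require Import all_classical all_reals all_analysis.
From mathcomp Require Import lra zify.
From mathcomp Require Import measurable_realfun.
Import Order.TTheory GRing.Theory Num.Theory.
Import numFieldNormedType.Exports.
Local Open Scope classical_set_scope.
Local Open Scope ring_scope.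


Section Dyadic.
Variable R : realType.
Implicit Types (x y : R) (I : dyad).

Definition inb I x : bool :=
  (I.2%:~R <= (2:R)^I.1 * x) && ((2:R)^I.1 * x < (I.2+1)%:~R).

Lemma p2_gt0 (j : int) : 0 < (2:R) ^ j.
Proof. by apply: exprz_gt0. Qed.

Lemma in_dyadP I x : in_dyad I x <-> inb I x.
Proof.
case: I => j k; rewrite /in_dyad /inb /= -!invr_expz.
have h := p2_gt0 j.
rewrite [k%:~R * _]mulrC ler_pdivrMl // [_ * _^-1]mulrC ltr_pdivlMl //.
by split => [[-> ->]|/andP[-> ->]].
Qed.

Lemma int_lt_S (a b : int) : a%:~R < b%:~R :> R -> (a+1)%:~R <= b%:~R :> R.
Proof. rewrite ltr_int ler_int => h; lia. Qed.

Lemma int_lt_S' (a b : int) : a%:~R < (b+1)%:~R :> R -> a%:~R <= b%:~R :> R.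
Proof. rewrite ltr_int ler_int => h; lia. Qed.

Lemma inb_coarse j j' k k' x x' : j <= j' ->
  inb (j', k') x -> inb (j', k') x' -> inb (j, k) x -> inb (j, k) x'.
Proof.
move=> hjj'.
have [n hn] : exists n : nat, j' = j + n%:Z.
  by exists `|j' - j|%N; rewrite gez0_abs ?subr_ge0 //; lia.
rewrite /inb /= hn expfzDr ?pnatr_eq0 // => /andP[a1 a2] /andP[b1 b2] /andP[c1 c2].
set u := 2 ^ j * x in a1 a2 c1 c2 *; set u' := 2 ^ j * x' in b1 b2 *.
set M := (2:R) ^ n%:Z in a1 a2 b1 b2.
have eM : M = ((2 ^ n)%N%:Z)%:~R by rewrite /M; change ((2:R)^+n = (2 ^ n)%N%:R); rewrite natrX.
have M0 : 0 < M by rewrite /M exprz_gt0.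
rewrite (_ : 2 ^ j * 2 ^ n%:Z * x = M * u) in a1 a2; last by rewrite /u /M; lra.
rewrite (_ : 2 ^ j * 2 ^ n%:Z * x' = M * u') in b1 b2; last by rewrite /u' /M; lra.
apply/andP; split.
  rewrite leNgt; apply/negP => hu.
  have h1 : M * u' < M * k%:~R by rewrite ltr_pM2l.
  have h2 : k'%:~R < (((2 ^ n)%N%:Z) * k)%:~R :> R.
    by rewrite intrM -eM; apply: le_lt_trans b1 h1.
  have h3 := int_lt_S _ _ h2; rewrite intrM -eM in h3.
  have h4 : M * k%:~R <= M * u by rewrite ler_pM2l.
  move: h3 h4 a2; clear; lra.
rewrite ltNge; apply/negP => hu.
have h1 : M * (k+1)%:~R <= M * u' by rewrite ler_pM2l.
have h2 : (((2 ^ n)%N%:Z) * (k+1))%:~R < (k'+1)%:~R :> R.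
  by rewrite intrM -eM; apply: le_lt_trans h1 b2.
have h3 := int_lt_S' _ _ h2; rewrite intrM -eM in h3.
have h4 : M * u < M * (k+1)%:~R by rewrite ltr_pM2l.
move: h3 h4 a1; clear; lra.
Qed.

Lemma haar_split j k x : haar ((2:R) ^ j * x - k%:~R) =
  (if inb (j + 1, 2 * k) x then 1 else 0) - (if inb (j + 1, 2 * k + 1) x then 1 else 0).
Proof.
rewrite /haar /inb /= expfzDr ?pnatr_eq0 // expr1z.
have e1 : 2 ^ j * 2 * x = 2 * (2 ^ j * x) by lra.
rewrite e1; set u := 2 ^ j * x.
have -> : (2 * k)%:~R = 2 * k%:~R :> R by rewrite intrM.
have -> : (2 * k + 1)%:~R = 2 * k%:~R + 1 :> R by rewrite intrD intrM.
have -> : (2 * k + 1 + 1)%:~R = 2 * k%:~R + 1 + 1 :> R by rewrite !intrD intrM.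
congr (_ - _); congr (if _ then _ else _); apply/idP/idP => /andP[h1 h2];
  apply/andP; split; lra.
Qed.

Lemma haarI_nz I x : haarI I x != 0 -> inb I x.
Proof.
case: I => j k; rewrite /haarI /= haar_split /inb /=.
rewrite expfzDr ?pnatr_eq0 // expr1z.
have -> : 2 ^ j * 2 * x = 2 * (2 ^ j * x) by lra.
set u := 2 ^ j * x.
have -> : (2 * k)%:~R = 2 * k%:~R :> R by rewrite intrM.
have -> : (2 * k + 1)%:~R = 2 * k%:~R + 1 :> R by rewrite intrD intrM.
have -> : (2 * k + 1 + 1)%:~R = 2 * k%:~R + 1 + 1 :> R by rewrite !intrD intrM.
have -> : (k + 1)%:~R = k%:~R + 1 :> R by rewrite intrD.
case: ifP => [/andP[h1 h2] _|_]; first by apply/andP; split; lra.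
case: ifP => [/andP[h1 h2] _|_]; first by apply/andP; split; lra.
by rewrite subrr mulr0 eqxx.
Qed.

Lemma haarI_coarse j' k' j k x x' : j + 1 <= j' ->
  inb (j', k') x -> inb (j', k') x' -> haarI (j, k) x = haarI (j, k) x'.
Proof.
move=> hj h1 h2; rewrite /haarI /= !haar_split.
have e : forall k0, inb (j + 1, k0) x = inb (j + 1, k0) x'.
  move=> k0; apply/idP/idP; [exact: (inb_coarse _ _ _ _ _ _ hj h1 h2)|exact: (inb_coarse _ _ _ _ _ _ hj h2 h1)].
by rewrite !e.
Qed.

Lemma haarI_prod_bound I x y :
  `|haarI I x * haarI I y| <= (2:R) ^ I.1 * (inb I x && inb I y)%:R.
Proof.
case: (boolP (inb I x && inb I y)) => [_|/nandP hn].
  case: I => j k; rewrite /haarI /= mulr1.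
  have hh : forall t : R, `|haar t| <= 1.
    move=> t; rewrite /haar; do 2 case: ifP => _; rewrite ?subrr ?normr0 ?subr0 ?sub0r ?normrN ?normr1 //.
  have e : (Num.sqrt (2:R)) ^ j * (Num.sqrt 2) ^ j = 2 ^ j.
    by rewrite -expfzMl -expr2 sqr_sqrtr.
  rewrite mulrACA normrM -e normrM [`|_ ^ j|]ger0_norm ?exprz_ge0 ?sqrtr_ge0 //.
  rewrite -[X in _ <= X]mulr1 normrM; apply: ler_wpM2l; first by rewrite e exprz_ge0.
  by rewrite -[1]mulr1; apply: ler_pM; [exact: normr_ge0|exact: normr_ge0|exact: hh|exact: hh].
rewrite mulr0; case: hn => /negP hn.
  have /eqP -> : haarI I x == 0 by apply/negPn/negP => hz; apply: hn; exact: haarI_nz hz.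
  by rewrite mul0r normr0.
have /eqP -> : haarI I y == 0 by apply/negPn/negP => hz; apply: hn; exact: haarI_nz hz.
by rewrite mulr0 normr0.
Qed.

End Dyadic.
Arguments p2_gt0 {R}. Arguments inb {R}. Arguments in_dyadP {R}.
Arguments int_lt_S {R}. Arguments int_lt_S' {R}. Arguments inb_coarse {R}.
Arguments haar_split {R}. Arguments haarI_nz {R}. Arguments haarI_coarse {R}.
Arguments haarI_prod_bound {R}.


Section Ddist.
Variable R : realType.
Local Set Implicit Arguments. Local Unset Strict Implicit.
Implicit Types (x y : R) (I : dyad).

Definition dset x y : set R := [set r : R | exists I : dyad,
        0 <= I.2 /\ in_dyad I x /\ in_dyad I y /\ r = (2:R) ^ (- I.1)].

Lemma ddistE x y : ddist x y = inf (dset x y).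
Proof. by []. Qed.

Lemma dset_lb x y : lbound (dset x y) 0.
Proof. by move=> _ [I [_ [_ [_ ->]]]]; apply/ltW/p2_gt0. Qed.

Lemma dset_hlb x y : has_lbound (dset x y).
Proof. by exists 0; apply: dset_lb. Qed.

Lemma k_ge0 I x : 0 <= x -> inb I x -> 0 <= I.2.
Proof.
case: I => j k /= x0 /andP[_ h].
have : 0%:~R < (k + 1)%:~R :> R.
  by apply: le_lt_trans h; rewrite mulr_ge0 // ltW // p2_gt0.
by rewrite ltr_int => h'; lia.
Qed.

Lemma in_dset I x y : 0 <= x -> inb I x -> inb I y -> dset x y (2 ^ (- I.1)).
Proof.
move=> x0 hx hy; exists I; split; first exact: k_ge0 hx.
by split; [apply/in_dyadP|split; [apply/in_dyadP|]].
Qed.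

Lemma ddist_le I x y : 0 <= x -> inb I x -> inb I y -> ddist x y <= 2 ^ (- I.1).
Proof. by move=> x0 hx hy; apply: (ge_inf (dset_hlb x y)); exact: in_dset. Qed.

Lemma ddist_ge0 x y : 0 <= ddist x y.
Proof.
rewrite ddistE; case: (pselect (dset x y !=set0)) => [ne|ne].
  exact: lb_le_inf ne (@dset_lb x y).
have -> : dset x y = set0 by apply/seteqP; split => // r hr; apply: ne; exists r.
by rewrite inf0.
Qed.

Lemma common_dyad x y : 0 <= x -> 0 <= y -> exists I, inb I x && inb I y.
Proof.
move=> x0 y0.
set n := Num.bound (Num.max x y).
have hb : Num.max x y < n%:R by apply: archi_boundP; rewrite le_max x0.
have hn : (n%:R : R) < 2 ^+ n by rewrite -natrX ltr_nat ltn_expl.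
have key : forall z, 0 <= z -> z <= Num.max x y -> inb (- n%:Z, 0) z.
  move=> z z0 zm; rewrite /inb /= add0r mulr_ge0 ?exprz_ge0 //=.
  rewrite -invr_expz ltr_pdivrMl; last exact: p2_gt0.
  rewrite mulr1; change (z < (2:R) ^+ n); lra.
exists (- n%:Z, 0); rewrite !key // ?le_max ?lexx ?orbT //.
Qed.

Lemma dset_ne x y : 0 <= x -> 0 <= y -> dset x y !=set0.
Proof.
move=> x0 y0; have [I /andP[hx hy]] := common_dyad x0 y0.
by exists (2 ^ (- I.1)); apply: in_dset.
Qed.

Lemma ddist_gt0 x y : 0 <= x -> 0 <= y -> x != y -> 0 < ddist x y.
Proof.
move=> x0 y0 xy; apply: (@lt_le_trans _ _ `|x - y|); first by rewrite normr_gt0 subr_eq0.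
rewrite ddistE; apply: lb_le_inf; first exact: dset_ne.
move=> _ [[j k] [_ [/in_dyadP/andP[h1 h2] [/in_dyadP/andP[h3 h4] ->]]]].
rewrite /= in h1 h2 h3 h4.
have p := p2_gt0 (R:=R) j.
have e : `|x - y| = (2 ^ j)^-1 * `|2 ^ j * x - 2 ^ j * y|.
  by rewrite -mulrBr normrM (gtr0_norm p) mulKf // gt_eqF.
rewrite e -invr_expz ler_pdivrMl // mulfV ?gt_eqF //.
rewrite intrD in h2 h4.
rewrite ler_norml; apply/andP; split; lra.
Qed.

Lemma ddist_approx x y e : 0 <= x -> 0 <= y -> 0 < e ->
  exists I, [/\ inb I x, inb I y & 2 ^ (- I.1) < ddist x y + e].
Proof.
move=> x0 y0 e0.
have [r [I [_ [hx [hy ->]]]] hr] := inf_adherent e0 (conj (dset_ne x0 y0) (dset_hlb x y)).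
by exists I; split => //; apply/in_dyadP.
Qed.

Lemma ddistC x y : ddist x y = ddist y x.
Proof.
rewrite !ddistE; congr inf; apply/seteqP; split => r [I [a [b [c d]]]]; exists I; by [].
Qed.

Lemma haar_b x y x' : 0 <= x -> 0 <= y -> 0 <= x' -> x != y ->
  2 * ddist x' x <= ddist x y ->
  forall I, haarI I x' * haarI I y = haarI I x * haarI I y.
Proof.
move=> x0 y0 x'0 xy hd.
have d0 := ddist_gt0 x0 y0 xy.
set d := ddist x y in hd d0.
have [[j' k'] [h1 h2 h3]] := ddist_approx x'0 x0 (divr_gt0 d0 (ltr0n _ 4)).
have h4 : 2 ^ (- j') < 3 / 4 * d by move: h3 hd; rewrite /=; lra.
move=> [j k]; case: (leP (j + 1) j') => hj.
  by rewrite (haarI_coarse _ _ _ _ _ _ hj h2 h1).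
have hjj : j' <= j by lia.
have z1 : forall z, inb (j', k') z -> haarI (j, k) z * haarI (j, k) y = 0.
  move=> z hz; apply/eqP; apply/negPn/negP; rewrite mulf_eq0 negb_or => /andP[nz ny].
  have iy := haarI_nz _ _ ny; have iz := haarI_nz _ _ nz.
  have jy : inb (j', k') y := inb_coarse _ _ _ _ _ _ hjj iz iy hz.
  have := ddist_le x0 h2 jy; rewrite -/d; lra.
by rewrite !z1.
Qed.
End Ddist.


Section Gen.
Variable R : realType.
Local Set Implicit Arguments. Local Unset Strict Implicit.

Lemma cs_step (t T s S q Q : R) : 0 <= s -> 0 <= S -> 0 <= q -> 0 <= Q ->
  t ^+ 2 <= s * q -> T ^+ 2 <= S * Q -> (t + T) ^+ 2 <= (s + S) * (q + Q).
Proof.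
move=> s0 S0 q0 Q0 h1 h2.
suff h : 2 * t * T <= s * Q + S * q by nra.
have hp : 0 <= s * Q + S * q by nra.
case: (lerP (2 * t * T) 0) => h0; first lra.
have e : (2 * t * T) ^+ 2 <= (s * Q + S * q) ^+ 2.
  have a : (t * T) ^+ 2 <= (s * q) * (S * Q).
    by rewrite exprMn; apply: ler_pM => //; apply: sqr_ge0.
  have b : 4 * ((s * q) * (S * Q)) <= (s * Q + S * q) ^+ 2.
    have := sqr_ge0 (s * Q - S * q); rewrite !expr2; lra.
  have -> : (2 * t * T) ^+ 2 = 4 * (t * T) ^+ 2 by rewrite !expr2; lra.
  lra.
by move: e; rewrite ler_sqr // ?nnegrE ?ltW.
Qed.

Lemma cs_gen (I : Type) (r : seq I) (S T Q : I -> R) :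
  (forall i, 0 <= S i) -> (forall i, 0 <= Q i) -> (forall i, T i ^+ 2 <= S i * Q i) ->
  (\sum_(i <- r) T i) ^+ 2 <= (\sum_(i <- r) S i) * (\sum_(i <- r) Q i).
Proof.
move=> S0 Q0 h; elim: r => [|i r IH]; first by rewrite !big_nil mul0r expr0n.
rewrite !big_cons; apply: cs_step => //; try exact: sumr_ge0.
Qed.

Lemma sum_single (n : nat) (f : 'I_n -> R) (M : R) : 0 <= M ->
  (forall l, 0 <= f l <= M) -> (forall l l', f l != 0 -> f l' != 0 -> l = l') ->
  \sum_(l < n) f l <= M.
Proof.
move=> M0 hb hu; case: (pickP (fun l => f l != 0)) => [l0 h0|h].
  rewrite (bigD1 l0) //= big1 ?addr0; first by case/andP: (hb l0).
  move=> l nl; apply/eqP; case: (eqVneq (f l) 0) => // fl.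
  by move/eqP: nl; case; apply: hu.
rewrite big1 // => l _; apply/eqP; case: (eqVneq (f l) 0) => // fl.
by have := h l; rewrite fl.
Qed.

Local Open Scope ereal_scope.

Lemma einfs_le_u (u : (\bar R)^nat) n : einfs u n <= u n.
Proof. by rewrite /einfs /=; apply: ereal_inf_lbound; rewrite /sdrop; exists n => /=. Qed.

Lemma limn_einf_ge0 (u : (\bar R)^nat) : (forall n, 0 <= u n) -> 0 <= limn_einf u.
Proof.
move=> h; rewrite limn_einf_lim; apply: lime_ge; first exact: is_cvg_einfs.
by apply: nearW => n; rewrite /einfs /sdrop /=; apply: le_ereal_inf_tmp => _ [k _ <-].
Qed.

Lemma limn_einf_le (u : (\bar R)^nat) b : (forall n, u n <= b) -> limn_einf u <= b.
Proof.
move=> h; rewrite limn_einf_lim; apply: lime_le; first exact: is_cvg_einfs.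
by apply: nearW => n; apply: le_trans (einfs_le_u u n) (h n).
Qed.

Lemma limn_einf_cvg_le (u v : (\bar R)^nat) l : u n @[n --> \oo] --> l ->
  (forall n, u n <= v n) -> l <= limn_einf v.
Proof.
move=> cu h; rewrite -(cvg_limn_einf_sup cu).1 !limn_einf_lim.
apply: lee_lim; [exact: is_cvg_einfs|exact: is_cvg_einfs|].
apply: nearW => n; rewrite /einfs /sdrop /=; apply: le_ereal_inf_tmp => _ [k hk <-].
apply: le_trans (h k); apply: ereal_inf_lbound; by exists k.
Qed.

End Gen.

Section Integ.
Local Open Scope ereal_scope.
Context d (T : measurableType d) (R : realType) (mu : {measure set T -> \bar R}).

Lemma ge0_le_integral_nm (f1 f2 : T -> \bar R) : (forall x, 0 <= f1 x) ->
  (forall x, f1 x <= f2 x) -> \int[mu]_x f1 x <= \int[mu]_x f2 x.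
Proof.
move=> f10 f12.
have f20 : forall x, 0 <= f2 x by move=> x; apply: le_trans (f10 x) (f12 x).
rewrite !ge0_integralTE //; apply: le_ereal_sup => _ [h hf <-]; exists h => //.
by move=> x; apply: le_trans (hf x) (f12 x).
Qed.
End Integ.


Section SM.
Local Set Implicit Arguments. Local Unset Strict Implicit.
Context d (T : measurableType d) (R : realType) (P : probability T R).

Lemma sq_le_exp (y : R) : y ^+ 2 <= 4 * (expR y + expR (- y)).
Proof.
have h1 := expR_ge1Dx (`|y| / 2).
have e : expR `|y| = expR (`|y| / 2) * expR (`|y| / 2) by rewrite -expRD; congr expR; lra.
have hy : y ^+ 2 = `|y| ^+ 2 by rewrite real_normK // num_real.
have hn := normr_ge0 y.
have b : y ^+ 2 <= 4 * expR `|y| by rewrite hy e; nra.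
apply: le_trans b _; rewrite ler_pM2l //.
have p1 := expR_ge0 y; have p2 := expR_ge0 (- y).
case: (ger0P y) => _; lra.
Qed.

Lemma mgf_bound (X : T -> R) nu lam : subG P nu X ->
  (\int[P]_w (mgf_centered P X lam w)%:E <= (expR (lam ^+ 2 * nu / 2))%:E)%E.
Proof.
case=> _ /(_ lam) []; rewrite expectation.unlock => hfin hln.
set E := (\int[P]_w _)%E in hfin hln *.
have E0 : (0 <= E)%E by apply: integral_ge0 => w _; rewrite lee_fin expR_ge0.
have Efin : E \is a fin_num by rewrite ge0_fin_numE.
rewrite -(fineK Efin) lee_fin.
case: (ltP 0 (fine E)) => h; last by apply: le_trans h (expR_ge0 _).
have e := @lnK R (fine E); rewrite posrE in e.
by rewrite -(e h) ler_expR.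
Qed.

Lemma second_moment (X : {RV P >-> R}) nu S : subG P nu X ->
  ('E_P[fun w => (`|X w|)%R] <= S%:E)%E ->
  (\int[P]_w ((X w) ^+ 2)%:E <= (16 * expR (nu / 2) + 2 * S ^+ 2)%:E)%E.
Proof.
move=> hX hS.
have mX : measurable_fun setT X by exact: measurable_funPT.
have mXE : measurable_fun setT (EFin \o (X : T -> R)) by exact/measurable_EFinP.
set m := fine ('E_P[X])%E.
have Efin : ('E_P[X])%E \is a fin_num.
  by rewrite expectation.unlock -integral_fin_num_abs //; case/integrableP: hX.1.
have hm : m ^+ 2 <= S ^+ 2.
  have a : (`|m|%:E <= S%:E)%E.
    apply: le_trans hS.
    have -> : (`|m|%:E = `|('E_P[X])%E|)%E by rewrite /m -[in RHS](fineK Efin).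
    rewrite !expectation.unlock; exact: (le_abse_integral P measurableT mXE).
  rewrite lee_fin in a; have := normr_ge0 m; rewrite -(real_normK (num_real m)).
  nra.
have mf : forall lam, measurable_fun setT (fun w => (mgf_centered P X lam w)%:E : \bar R).
  move=> lam; apply/measurable_EFinP; apply: measurableT_comp => //.
  apply: measurable_funM => //; apply: measurable_funB => //.
have f0 : forall lam w, (0 <= (mgf_centered P X lam w)%:E)%E.
  by move=> lam w; rewrite lee_fin expR_ge0.
have g1 := mgf_bound 1 hX; have g2 := mgf_bound (-1) hX.
rewrite expr1n mul1r in g1; rewrite sqrrN expr1n mul1r in g2.
have pw : forall w, (X w) ^+ 2 <= 8 * mgf_centered P X 1 w + 8 * mgf_centered P X (-1) w + 2 * m ^+ 2.
  move=> w; rewrite /mgf_centered mul1r mulN1r -/m.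
  have := sq_le_exp (X w - m); have := sqr_ge0 (X w - m - m); rewrite !expr2; nra.
apply: (@le_trans _ _ (\int[P]_w ((8 * mgf_centered P X 1 w + 8 * mgf_centered P X (-1) w + 2 * m ^+ 2)%:E))%E).
  apply: ge0_le_integral => //.
  - by move=> w _; rewrite lee_fin sqr_ge0.
  - by apply/measurable_EFinP; apply: measurable_funX.
  - apply/measurable_EFinP; apply: measurable_funD => //; apply: measurable_funD => //;
      apply: measurable_funM => //; apply/measurable_EFinP; exact: mf.
  - by move=> w _; rewrite lee_fin.
under eq_integral do rewrite !EFinD !EFinM.
have m8 : forall lam, measurable_fun setT (fun w => (8%:E * (mgf_centered P X lam w)%:E)%E : \bar R).
  by move=> lam; apply: emeasurable_funM => //.
have p8 : forall lam w, [set: T] w -> (0 <= 8%:E * (mgf_centered P X lam w)%:E)%E.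
  by move=> lam w _; rewrite mule_ge0.
rewrite ge0_integralD //; first last.
- by move=> w _; rewrite -!EFinM lee_fin; apply: mulr_ge0 => //; rewrite -expr2; exact: sqr_ge0.
- exact: emeasurable_funD.
- by move=> w _; rewrite adde_ge0 // mule_ge0.
rewrite ge0_integralD //.
have ic : (\int[P]_x (2%:E * (m%:E * m%:E)) = 2%:E * (m%:E * m%:E))%E.
  apply: eq_trans (integral_cst P measurableT _) _; rewrite [X in (_ * X)%E](_ : _ = 1%E) ?mule1 //; exact: probability_setT.
rewrite ic !ge0_integralZl_EFin //.
have e8 : (8%:E * (expR (nu / 2))%:E + 8%:E * (expR (nu / 2))%:E + 2%:E * (m%:E * m%:E)
   = (16 * expR (nu / 2) + 2 * m ^+ 2)%:E)%E.
  by rewrite -!EFinM -!EFinD expr2; congr EFin; lra.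
apply: le_trans (_ : (_ <= 8%:E * (expR (nu / 2))%:E + 8%:E * (expR (nu / 2))%:E + 2%:E * (m%:E * m%:E))%E) _.
  by apply: leeD => //; apply: leeD; apply: lee_wpmul2l.
by rewrite e8 lee_fin; lra.
all: by move=> w _; rewrite mule_ge0.
Qed.
End SM.


Section Box.
Variable R : realType.
Local Set Implicit Arguments. Local Unset Strict Implicit.
Implicit Types (x y : R).

Definition Iof (N i l : nat) : dyad := ((i%:Z - N%:Z)%R, (l%:Z - (4 ^ N)%:Z)%R).

Definition box (N : nat) (F : dyad -> R) : R :=
  \sum_(i < (N.*2).+1) \sum_(l < (4 ^ N).*2.+1) F (Iof N i l).

Lemma KpartE (T : Type) (a : dyad -> T -> R) x y N w :
  Kpart a x y N w = box N (fun I => a I w * haarI I x * haarI I y).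
Proof. by []. Qed.

Lemma inb_uniq j k k' x : inb (j, k) x -> inb (j, k') x -> k = k'.
Proof.
rewrite /inb /= => /andP[a1 a2] /andP[b1 b2].
have h1 : k%:~R < (k' + 1)%:~R :> R by apply: le_lt_trans a1 b2.
have h2 : k'%:~R < (k + 1)%:~R :> R by apply: le_lt_trans b1 a2.
rewrite ltr_int in h1; rewrite ltr_int in h2; lia.
Qed.

Definition gterm N dl (i : nat) : R :=
  if (2:R) ^ (i%:Z - N%:Z) * dl <= 1 then (2:R) ^ (i%:Z - N%:Z) else 0.

Lemma geom_bound N dl n : 0 < dl ->
  \sum_(i < n) gterm N dl i <= (2:R) ^ (n%:Z - N%:Z) /\
  \sum_(i < n) gterm N dl i <= 2 / dl.
Proof.
move=> d0; elim: n => [|n [IH1 IH2]].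
  rewrite big_ord0; split; [exact/ltW/p2_gt0|by rewrite divr_ge0 // ltW].
rewrite big_ord_recr /=.
have e : (2:R) ^ (n.+1%:Z - N%:Z) = 2 * 2 ^ (n%:Z - N%:Z).
  rewrite (_ : n.+1%:Z - N%:Z = (n%:Z - N%:Z) + 1); last by lia.
  by rewrite expfzDr ?pnatr_eq0 // expr1z mulrC.
have S0 : 0 <= \sum_(i < n) gterm N dl i.
  by apply: sumr_ge0 => i _; rewrite /gterm; case: ifP => // _; rewrite ltW // p2_gt0.
set S := \sum_(i < n) _ in IH1 IH2 S0 *.
rewrite e /gterm; set p := (2:R) ^ (n%:Z - N%:Z) in IH1 *.
have p0 : 0 < p by apply: p2_gt0.
case: ifP => h; rewrite ?addr0; split; try lra.
have h2 : p <= 1 / dl by rewrite ler_pdivlMr.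
move: IH1 h2; clear -d0; move=> *; lra.
Qed.

Lemma box_c x y N : 0 <= x -> 0 < ddist x y ->
  box N (fun I => `|haarI I x * haarI I y|) <= 2 / ddist x y.
Proof.
move=> x0 d0; set dl := ddist x y.
apply: le_trans (_ : \sum_(i < (N.*2).+1) gterm N dl i <= _); last first.
  exact: (geom_bound N (N.*2).+1 d0).2.
apply: ler_sum => i _; apply: sum_single.
- by rewrite /gterm; case: ifP => // _; rewrite ltW // p2_gt0.
- move=> l; rewrite normr_ge0 /=.
  have hb := haarI_prod_bound (Iof N i l) x y.
  have g0 : 0 <= gterm N dl i by rewrite /gterm; case: ifP => // _; rewrite ltW // p2_gt0.
  case hxy : (inb (Iof N i l) x && inb (Iof N i l) y) in hb.
    case/andP: hxy => hx hy; rewrite mulr1 in hb.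
    apply: le_trans hb _; rewrite /gterm /Iof /= ifT //.
    have := ddist_le x0 hx hy; rewrite -/dl -invr_expz /Iof /= => h.
    have p0 : 0 < (2:R) ^ (i%:Z - N%:Z) by apply: p2_gt0.
    by move: h; rewrite -[X in _ <= X]mulr1 ler_pdivlMl.
  by rewrite mulr0 in hb; apply: le_trans hb g0.
- move=> l l' hl hl'; apply: val_inj => /=.
  have ix : inb (Iof N i l) x.
    by apply: haarI_nz; apply: contraNneq hl => ->; rewrite mul0r normr0.
  have ix' : inb (Iof N i l') x.
    by apply: haarI_nz; apply: contraNneq hl' => ->; rewrite mul0r normr0.
  have := inb_uniq ix ix'; lia.
Qed.

End Box.


Section Main.
Local Set Implicit Arguments. Local Unset Strict Implicit.
Context d (T : measurableType d) (R : realType) (P : probability T R).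
Variable a : dyad -> {RV P >-> R}.
Local Notation A := (fun I => (a I : T -> R)).

Lemma ma I : measurable_fun setT (A I).
Proof. exact: measurable_funPT. Qed.

Lemma pw_bound x y N w : 0 <= x -> 0 < ddist x y ->
  (Kpart A x y N w) ^+ 2 <=
  2 / ddist x y * box N (fun I => `|haarI I x * haarI I y| * (A I w) ^+ 2).
Proof.
move=> x0 d0; rewrite KpartE /box.
set c := fun I => `|haarI I x * haarI I y|.
have hT : forall I, (A I w * haarI I x * haarI I y) ^+ 2 <= c I * (c I * A I w ^+ 2).
  move=> I.
  have e1 : (A I w * haarI I x * haarI I y) ^+ 2 = A I w ^+ 2 * (haarI I x * haarI I y) ^+ 2.
    by rewrite -mulrA exprMn.
  have e2 : c I * (c I * A I w ^+ 2) = (haarI I x * haarI I y) ^+ 2 * A I w ^+ 2.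
    by rewrite mulrA -expr2 /c real_normK ?num_real.
  by rewrite e1 e2 mulrC.
have Q0 : forall I, 0 <= c I * A I w ^+ 2 by move=> I; apply: mulr_ge0; [exact: normr_ge0|exact: sqr_ge0].
pose S (i : 'I_(N.*2).+1) := \sum_(l < (4 ^ N).*2.+1) c (Iof N i l).
pose Q (i : 'I_(N.*2).+1) := \sum_(l < (4 ^ N).*2.+1) c (Iof N i l) * A (Iof N i l) w ^+ 2.
pose Tf (i : 'I_(N.*2).+1) :=
  \sum_(l < (4 ^ N).*2.+1) A (Iof N i l) w * haarI (Iof N i l) x * haarI (Iof N i l) y.
have inner : forall i, Tf i ^+ 2 <= S i * Q i.
  by move=> i; apply: cs_gen => // l; exact: normr_ge0.
have := cs_gen (index_enum _) (S := S) (T := Tf) (Q := Q)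
  (fun i => sumr_ge0 _ (fun l _ => normr_ge0 _)) (fun i => sumr_ge0 _ (fun l _ => Q0 _)) inner.
move=> /le_trans; apply.
apply: ler_wpM2r; first by apply: sumr_ge0 => i _; apply: sumr_ge0 => l _; apply: Q0.
exact: box_c.
Qed.


Lemma int_box x y N (C k : R) : 0 <= k -> 0 <= C ->
  (forall I, (\int[P]_w ((A I w) ^+ 2)%:E <= C%:E)%E) ->
  (\int[P]_w ((k * box N (fun I => `|haarI I x * haarI I y| * (A I w) ^+ 2))%:E)
     <= (k * C * box N (fun I => `|haarI I x * haarI I y|))%:E)%E.
Proof.
move=> k0 C0 hC; set c := fun I => `|haarI I x * haarI I y|.
have c0 : forall I, 0 <= c I by move=> I; exact: normr_ge0.
have e : forall w, (k * box N (fun I => c I * A I w ^+ 2))%:E =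
  (\sum_(i < (N.*2).+1) \sum_(l < (4 ^ N).*2.+1) ((k * c (Iof N i l)) * A (Iof N i l) w ^+ 2)%:E)%E.
  move=> w; rewrite /box mulr_sumr -sumEFin; apply: eq_bigr => i _.
  by rewrite mulr_sumr -sumEFin; apply: eq_bigr => l _; rewrite mulrA.
under eq_integral do rewrite e.
have mt : forall I k', measurable_fun setT (fun w => ((k' * A I w ^+ 2)%:E : \bar R)).
  move=> I k'; apply/measurable_EFinP; apply: measurable_funM => //; apply: measurable_funX; exact: ma.
have pt : forall I k' w, 0 <= k' -> (0 <= ((k' * A I w ^+ 2)%:E : \bar R))%E.
  by move=> I k' w k'0; rewrite lee_fin mulr_ge0 // sqr_ge0.
rewrite ge0_integral_sum; first last.
- move=> i w _; apply: sume_ge0 => l _; apply: pt; exact: mulr_ge0.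
- move=> i; apply: emeasurable_sum => l; exact: mt.
- exact: measurableT.
have hterm : forall I, (\int[P]_w ((k * c I) * A I w ^+ 2)%:E <= ((k * c I) * C)%:E)%E.
  move=> I; under eq_integral do rewrite EFinM.
  rewrite ge0_integralZl_EFin //.
  - by rewrite [X in (_ <= X)%E]EFinM; apply: lee_wpmul2l => //; rewrite lee_fin mulr_ge0.
  - by move=> w _; rewrite lee_fin sqr_ge0.
  - by apply/measurable_EFinP; apply: measurable_funX; exact: ma.
  - exact: mulr_ge0.
have -> : (k * C * box N c)%:E =
  (\sum_(i < (N.*2).+1) \sum_(l < (4 ^ N).*2.+1) ((k * c (Iof N i l)) * C)%:E)%E.
  rewrite /box mulr_sumr -sumEFin; apply: eq_bigr => i _.
  rewrite mulr_sumr -sumEFin; apply: eq_bigr => l _; congr EFin; lra.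
apply: lee_sum => i _.
rewrite ge0_integral_sum; first last.
- move=> l w _; apply: pt; exact: mulr_ge0.
- move=> l; exact: mt.
- exact: measurableT.
by apply: lee_sum => l _; apply: hterm.
Qed.


Lemma Kpw x y w : 0 <= x -> 0 < ddist x y ->
  (((Kfun A x y w) ^+ 2)%:E <= limn_einf (fun N =>
     (2 / ddist x y * box N (fun I => `|haarI I x * haarI I y| * (A I w) ^+ 2))%:E))%E.
Proof.
move=> x0 d0.
case: (pselect (cvgn (fun N => Kpart A x y N w))) => hc.
  apply: (limn_einf_cvg_le (u := fun N => ((Kpart A x y N w) ^+ 2)%:E)).
    apply: cvg_EFin; first exact: nearW.
    exact: (cvgM hc hc).
  by move=> N; rewrite lee_fin; exact: pw_bound.
have -> : Kfun A x y w = 0.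
  rewrite /Kfun /lim /lim_in; apply: getPN => l hl; apply: hc; apply/cvg_ex; exists l; exact: hl.
rewrite expr0n /=; apply: limn_einf_ge0 => N; rewrite lee_fin.
apply: mulr_ge0; first by rewrite divr_ge0 // ltW.
by apply: sumr_ge0 => i _; apply: sumr_ge0 => l _; apply: mulr_ge0; [exact: normr_ge0|exact: sqr_ge0].
Qed.


Lemma part_a (x y C : R) : 0 <= x -> 0 <= y -> x != y -> 0 <= C ->
  (forall I, (\int[P]_w ((A I w) ^+ 2)%:E <= C%:E)%E) ->
  ('N[P]_2%:E[EFin \o Kfun A x y] <= (2 * Num.sqrt C / ddist x y)%:E)%E.
Proof.
move=> x0 y0 xy C0 hC.
have d0 := ddist_gt0 x0 y0 xy; set dl := ddist x y in d0 *.
set G := fun N w => 2 / dl * box N (fun I => `|haarI I x * haarI I y| * (A I w) ^+ 2).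
have mG : forall N, measurable_fun setT (fun w => (G N w)%:E : \bar R).
  move=> N; apply/measurable_EFinP; apply: measurable_funM => //.
  apply: measurable_sum => i; apply: measurable_sum => l.
  apply: measurable_funM => //; apply: measurable_funX; exact: ma.
have G0 : forall N w, (0 <= (G N w)%:E)%E.
  move=> N w; rewrite lee_fin; apply: mulr_ge0; first by rewrite divr_ge0 // ltW.
  by apply: sumr_ge0 => i _; apply: sumr_ge0 => l _; apply: mulr_ge0; [exact: normr_ge0|exact: sqr_ge0].
have hI : (\int[P]_w ((Kfun A x y w) ^+ 2)%:E <= ((2 / dl) ^+ 2 * C)%:E)%E.
  apply: le_trans (@ge0_le_integral_nm _ _ _ P (fun w => ((Kfun A x y w) ^+ 2)%:E)
    (fun w => limn_einf (fun N => (G N w)%:E)) _ _) _.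
  - by move=> w; rewrite lee_fin sqr_ge0.
  - by move=> w; exact: Kpw.
  apply: le_trans (fatou P measurableT (f := fun N w => (G N w)%:E) (fun N => mG N) (fun N w _ => G0 N w)) _.
  apply: limn_einf_le => N.
  apply: le_trans (int_box x y N (divr_ge0 (ler0n _ 2) (ltW d0)) C0 hC) _.
  rewrite lee_fin; set k := 2 / dl.
  have k0 : 0 <= k by rewrite divr_ge0 // ltW.
  apply: le_trans (_ : k * C * box N (fun I => `|haarI I x * haarI I y|) <= k * C * k) _.
    by apply: ler_wpM2l; [exact: mulr_ge0|exact: box_c].
  by rewrite expr2 mulrAC.
rewrite Lnorm.unlock /=.
have e : forall w, (`|Kfun A x y w| `^ 2)%:E = ((Kfun A x y w) ^+ 2)%:E :> \bar R.
  by move=> w; rewrite -[2%R]/(2%:R) powR_mulrn ?normr_ge0 // real_normK // num_real.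
under eq_integral do rewrite e.
set X := (\int[P]_w _)%E in hI *.
have X0 : (0 <= X)%E by apply: integral_ge0 => w _; rewrite lee_fin sqr_ge0.
have := @gt0_ler_poweR R (2^-1) _ X (((2 / dl) ^+ 2 * C)%:E).
have h2 : (0:R) <= 2^-1 by rewrite invr_ge0.
rewrite !in_itv /= X0 !leey lee_fin mulr_ge0 ?sqr_ge0 // => /(_ h2 isT isT hI).
move/le_trans; apply.
have eq : (((2 / dl) ^+ 2 * C) `^ 2^-1) = 2 * Num.sqrt C / dl.
  rewrite powR12_sqrt; last by apply: mulr_ge0 => //; exact: sqr_ge0.
  rewrite sqrtrM ?sqr_ge0 // sqrtr_sqr.
  by rewrite ger0_norm ?divr_ge0 ?ltW // mulrAC.
by rewrite ?poweR_EFin eq.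
Qed.
End Main.


Lemma Kfun_eq (T' : Type) (R : realType) (A : dyad -> T' -> R) x y x2 y2 w :
  (forall I, haarI I x2 * haarI I y2 = haarI I x * haarI I y) ->
  Kfun A x2 y2 w = Kfun A x y w.
Proof.
move=> h; rewrite /Kfun.
have -> : (fun N => Kpart A x2 y2 N w) = (fun N => Kpart A x y N w).
  apply: funext => N; rewrite !KpartE /box; apply: eq_bigr => i _; apply: eq_bigr => l _.
  by rewrite /= -[LHS]mulrA -[RHS]mulrA h.
by [].
Qed.

Theorem theorem5p1 (d : measure_display) (T : measurableType d) (R : realType)
  (P : probability T R) (a : dyad -> {RV P >-> R}) (nu : R) :
  0 < nu ->
  independent_family P (fun I => a I : T -> R) ->
  (\esum_(I in [set: dyad]) 'E_P[fun w => (`|a I w|)%R] < +oo)%E ->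
  (forall I, subG P nu (a I)) ->
  exists B : R, forall x y x' y' : R,
    0 <= x -> 0 <= y -> 0 <= x' -> 0 <= y' -> x != y ->
    ('N[P]_2%:E[EFin \o Kfun (fun I => a I : T -> R) x y]
        <= (B / ddist x y)%:E)%E /\
    (2 * ddist x' x <= ddist x y ->
      ('N[P]_2%:E[(fun w => (Kfun (fun I => a I : T -> R) x' y w
                          - Kfun (fun I => a I : T -> R) x y w)%R%:E)]
        <= (B * ddist x' x / ddist x y ^+ 2)%:E)%E) /\
    (2 * ddist y' y <= ddist x y ->
      ('N[P]_2%:E[(fun w => (Kfun (fun I => a I : T -> R) x y' w
                          - Kfun (fun I => a I : T -> R) x y w)%R%:E)]
        <= (B * ddist y' y / ddist x y ^+ 2)%:E)%E).
Proof.
move=> nu0 _ hsum hsub.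
set Sig := (\esum_(I in [set: dyad]) 'E_P[fun w => (`|a I w|)%R])%E in hsum.
have Sig0 : (0 <= Sig)%E.
  apply: esum_ge0 => I _; rewrite expectation.unlock; apply: integral_ge0 => w _.
  by rewrite lee_fin normr_ge0.
have Sigfin : Sig \is a fin_num by rewrite ge0_fin_numE.
set S := fine Sig.
have hS : forall I, ('E_P[fun w => (`|a I w|)%R] <= S%:E)%E.
  move=> I; rewrite /S fineK //; apply: esum_ge; exists [set I].
    by split; [exact: finite_set1|exact: subsetT].
  by rewrite fsbig_set1.
set C := 16 * expR (nu / 2) + 2 * S ^+ 2.
have C0 : 0 <= C by rewrite /C addr_ge0 // mulr_ge0 // ?expR_ge0 // sqr_ge0.
have hC : forall I, (\int[P]_w ((a I w) ^+ 2)%:E <= C%:E)%E.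
  by move=> I; exact: second_moment (hsub I) (hS I).
exists (2 * Num.sqrt C).
move=> x y x' y' x0 y0 x'0 y'0 xy.
have B0 : 0 <= 2 * Num.sqrt C by rewrite mulr_ge0 // sqrtr_ge0.
have rhs0 : forall u : R, 0 <= u -> (0 <= (2 * Num.sqrt C * u / ddist x y ^+ 2)%:E)%E.
  by move=> u u0; rewrite lee_fin divr_ge0 ?sqr_ge0 // mulr_ge0.
split; first exact: part_a x0 y0 xy C0 hC.
split.
  move=> hd.
  have -> : (fun w => ((Kfun (fun I => a I : T -> R) x' y w
                - Kfun (fun I => a I : T -> R) x y w)%R%:E)) = cst 0%E.
    apply: funext => w; rewrite (@Kfun_eq _ _ _ x y x' y w (haar_b x0 y0 x'0 xy hd)).
    by rewrite subrr.
  by rewrite Lnorm0 // rhs0 // ddist_ge0.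
move=> hd.
have hd' : 2 * ddist y' y <= ddist y x by rewrite (@ddistC _ y x).
have yx : y != x by rewrite eq_sym.
have hb := haar_b y0 x0 y'0 yx hd'.
have -> : (fun w => ((Kfun (fun I => a I : T -> R) x y' w
              - Kfun (fun I => a I : T -> R) x y w)%R%:E)) = cst 0%E.
  apply: funext => w; rewrite (@Kfun_eq _ _ _ x y x y' w); first by rewrite subrr.
  by move=> I; rewrite ![haarI I x * _]mulrC hb.
by rewrite Lnorm0 // rhs0 // ddist_ge0.
Qed.
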